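(* Assume $\xi_p\in F$, let $m\ge1$, and suppose $K/F$ is cyclotomic, i.e. $K=F(\mu_{p^k})$ for some $k\ge1$; if $p=2$ assume moreover $\omega>1$. Let $d\in\mathbb Z$ satisfy $d\equiv\chi(\sigma)\pmod{p^{\min\{m,\nu\}}}$, where $\chi$ is the cyclotomic character of $K/F$. Then $((-\infty,\dots,-\infty),d)$ is a minimal norm pair of length $m$.
   Context: Let $p$ be a prime, $n\ge1$, and $K/F$ a cyclic Galois extension of degree $p^n$ with $\mathrm{char}(K)\neq p$; $G=\mathrm{Gal}(K/F)=\langle\sigma\rangle$. For $0\le i\le n$ let $K_i$ be the intermediate field with $[K_i:F]=p^i$. For $k\ge1$, $\mu_{p^k}$ is the group of $p^k$-th roots of unity. $\omega$ (resp. $\nu$) is $\infty$ if $F$ (resp. $K$) contains $\mu_{p^k}$ for all $k$, and otherwise the largest $k$ with $\mu_{p^k}\subseteq F$ (resp. $\subseteq K$). $U_i=1+p^i\mathbb Z$, $v_p$ the $p$-adic valuation. $\chi(\sigma)\in(\mathbb Z/p^\nu\mathbb Z)^\times$ is defined by $\sigma(\zeta)=\zeta^{\chi(\sigma)}$ for $\zeta\in\mu_{p^\nu}$. Norm pair: for $m\ge1$, a pair $(\mathbf a,d)$ with $\mathbf a=(a_0,\dots,a_{m-1})\in\{-\infty,0,1,\dots,n\}^m$, $a_0<n$, and $d\in U_1$ is a norm pair of length $m$ if there exist $\alpha,\delta_m\in K^\times$ and $\delta_i\in K_{a_i}^\times$ for $0\le i<m$ (with $\delta_i=1$ when $a_i=-\infty$)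 such that $\sigma(\alpha)=\alpha^d\delta_0\delta_1^p\cdots\delta_m^{p^m}$ and $\xi_p=N_{K/F}(\alpha)^{(d-1)/p}\,N_{K_{n-1}/F}(\delta_0)\prod_{i=1}^m N_{K/F}(\delta_i)^{p^{i-1}}$ for a fixed primitive $p$-th root of unity $\xi_p$. Order: $(\mathbf a,d)\le(\mathbf a',d')$ if $\mathbf a<\mathbf a'$ lexicographically ($-\infty$ smallest), or $\mathbf a=\mathbf a'$ and $\min\{v_p(d'-1),m\}\le\min\{v_p(d-1),m\}$. A norm pair of length $m$ is minimal if it is $\le$ every norm pair of length $m$. *)

(* Defs.v *)
From HB Require Import structures.
From mathcomp Require Import all_boot all_order all_algebra all_fingroup all_solvable all_field.
Import Order.TTheory GRing.Theory Num.Theory.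
Local Open Scope ring_scope.

Section NormPairs.
Variables (F0 : fieldType) (L : splittingFieldType F0).

Definition has_mu (p : nat) (E : {subfield L}) (k : nat) : Prop :=
  exists2 z : L, z \in E & (p ^ k)%N.-primitive_root z.

(* j = min(m, nu), nu = sup { k | mu_{p^k} in K } (possibly infinite) *)
Definition is_min_m_nu (p : nat) (K : {subfield L}) (m j : nat) : Prop :=
  [/\ (j <= m)%N, has_mu p K j & ((j < m)%N -> ~ has_mu p K j.+1)].

(* d = chi(sigma) mod p^j : sigma(zeta) = zeta^d for every zeta in mu_{p^j} *)
Definition chi_congr (p : nat) (K : {subfield L}) (sigma : gal_of K)
    (j : nat) (d : int) : Prop :=
  forall z : L, z \in K -> z ^+ (p ^ j) = 1 -> sigma z = z ^ d.

(* exponents a_i in {-oo, 0, ..., n}; None stands for -oo *)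
Definition olt (x y : option nat) : bool :=
  match x, y with
  | None, Some _ => true
  | Some k, Some l => (k < l)%N
  | _, _ => false
  end.

Fixpoint lex_lt (s t : seq (option nat)) : bool :=
  match s, t with
  | x :: s', y :: t' => olt x y || ((x == y) && lex_lt s' t')
  | _, _ => false
  end.

(* min { v_p(x), m }, with v_p(0) = oo *)
Definition vmin (p m : nat) (x : int) : nat :=
  if x == 0 then m else minn (logn p `|x|%N) m.

Definition norm_pair (p n : nat) (F K : {subfield L}) (sigma : gal_of K)
    (Ks : nat -> {subfield L}) (xi : L) (m : nat)
    (a : seq (option nat)) (d : int) : Prop :=
  [/\ [/\ (1 <= m)%N, size a = m,
         all (fun x => if x is Some k then (k <= n)%N else true) a &
         (if nth None a 0 is Some k then (k < n)%N else true)],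
      (p%:Z %| d - 1)%Z &
      exists (alpha : L) (delta : nat -> L),
        [/\ [/\ alpha \in K, alpha != 0, delta m \in K & delta m != 0],
            (forall i, (i < m)%N ->
               if nth None a i is Some k then delta i \in Ks k /\ delta i != 0
               else delta i = 1),
            sigma alpha = alpha ^ d * \prod_(i < m.+1) delta i ^+ (p ^ i) &
            xi = galNorm F K alpha ^ ((d - 1) %/ p%:Z)%Z
                 * galNorm F (Ks n.-1) (delta 0%N)
                 * \prod_(1 <= i < m.+1) galNorm F K (delta i) ^+ (p ^ i.-1)]].

Definition np_le (p m : nat) (a : seq (option nat)) (d : int)
    (a' : seq (option nat)) (d' : int) : bool :=
  lex_lt a a' || ((a == a') && (vmin p m (d' - 1) <= vmin p m (d - 1))%N).

Definition minimal_norm_pair (p n : nat) (F K : {subfield L}) (sigma : gal_of K)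
    (Ks : nat -> {subfield L}) (xi : L) (m : nat)
    (a : seq (option nat)) (d : int) : Prop :=
  norm_pair p n F K sigma Ks xi m a d /\
  forall a' d', norm_pair p n F K sigma Ks xi m a' d' -> np_le p m a d a' d'.

End NormPairs.
Arguments has_mu {F0 L}.
Arguments is_min_m_nu {F0 L}.
Arguments chi_congr {F0 L}.
Arguments norm_pair {F0 L}.
Arguments minimal_norm_pair {F0 L}.

(* Main.v *)
Require Import Defs.
From HB Require Import structures.
From mathcomp Require Import all_boot all_order all_algebra all_fingroup all_solvable all_field.
From mathcomp Require Import ring zify.
Import Order.TTheory GRing.Theory Num.Theory.
Lemma geom_mod (p w N : nat) : exists b,
  2 * (\sum_(i < N) (p * w + 1) ^ i) = 2 * N + p * w * (N * N.-1) + 2 * b * p ^ 2.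
Proof.
have pw : forall i, exists a, (p * w + 1) ^ i = 1 + i * p * w + a * p ^ 2.
  elim=> [|i [a IH]]; first by exists 0; rewrite expn0 //.
  exists (i * w ^ 2 + a + a * p * w); rewrite expnS IH; ring.
elim: N => [|N [b IH]]; first by exists 0; rewrite big_ord0 /=; ring.
have [a Ha] := pw N.
exists (b + a); rewrite big_ord_recr /= mulnDr IH Ha.
case: N {IH Ha} => [|N] /=; ring.
Qed.

Lemma lte_nat (p k x : nat) : prime p -> 0 < x -> p %| x - 1 ->
  (p = 2 -> 4 %| x - 1) -> ~~ (p ^ k %| x - 1) ->
  ~~ (p ^ k.+1 %| x ^ p - 1).
Proof.
move=> pp x0 px p2 nk.
have p1 := prime_gt1 pp; have p0 := prime_gt0 pp.
set T := \sum_(i < p) x ^ i.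
have eT : x ^ p - 1 = (x - 1) * T by rewrite !subn1 predn_exp.
have [pT npT] : p %| T /\ ~~ (p ^ 2 %| T).
  have [w ew] : exists w, x - 1 = p * w by case/dvdnP: px => w ->; exists w; rewrite mulnC.
  have ex : x = p * w + 1 by rewrite -ew subnK.
  have [pe | pne] := eqVneq p 2.
    have := p2 pe; rewrite /T pe !big_ord_recr big_ord0 /= expn0 expn1 ex pe.
    have -> : 4 = 2 * 2 by []. rewrite addnK dvdn_pmul2l // => /dvdnP[v ->].
    have -> : 0 + 1 + (2 * (v * 2) + 1) = 2 * (2 * v + 1) by ring.
    split; first exact: dvdn_mulr.
    rewrite (_ : 2 ^ 2 = 2 * 2) // dvdn_pmul2l // dvdn_addr //; exact: dvdn_mulr.
  have [b Hb] := geom_mod p w p; rewrite -ex -/T in Hb.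
  have cp2 : coprime p 2.
    rewrite prime_coprime //; apply/negP => /(dvdn_leq (isT : 0 < 2)) h.
    by move: pne; rewrite eqn_leq h p1.
  have e2 : 2 * T = p * (2 + p * (w * p.-1 + 2 * b)) by rewrite Hb; ring.
  split.
    by rewrite -(Gauss_dvdr _ cp2) e2 dvdn_mulr.
  apply/negP => h; have : p ^ 2 %| 2 * T by rewrite dvdn_mull.
  rewrite e2 (_ : p ^ 2 = p * p) ?mulnn // dvdn_pmul2l // dvdn_addl; last exact: dvdn_mulr.
  by move/(dvdn_leq (isT : 0 < 2)) => h2; move: pne; rewrite eqn_leq h2 p1.
rewrite eT; case/dvdnP: pT => T' eT'.
have npT' : ~~ (p %| T').
  apply: contra npT; case/dvdnP => u eu; rewrite eT' eu -mulnA mulnn.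
  exact: dvdn_mull.
rewrite eT' mulnA expnSr dvdn_pmul2r // Gauss_dvdl //.
by apply: coprimeXl; rewrite prime_coprime.
Qed.

Local Open Scope ring_scope.

Lemma zpow1 (L : fieldType) (z : L) (N : nat) (t : int) :
  N.-primitive_root z -> (z ^ t == 1) = (N%:Z %| t)%Z.
Proof.
move=> pz; case: t => n.
  by rewrite -exprnP -(prim_order_dvd pz) dvdzE.
rewrite NegzE -invr_expz invr_eq1 -exprnP -(prim_order_dvd pz) dvdzE abszN.
by [].
Qed.

Lemma prim_neq0 (L : fieldType) (z : L) (N : nat) : N.-primitive_root z -> z != 0.
Proof.
move=> pz; apply/eqP=> z0; move: (prim_expr_order pz) (prim_order_gt0 pz); rewrite z0 expr0n.
by case: N {pz} => // N; rewrite /= => /esym/eqP; rewrite oner_eq0.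
Qed.

Lemma zpow_eq (L : fieldType) (z : L) (N : nat) (i j : int) :
  N.-primitive_root z -> (z ^ i == z ^ j) = (N%:Z %| i - j)%Z.
Proof.
move=> pz; have z0 := @prim_neq0 _ z N pz.
rewrite -(@zpow1 _ z N (i - j) pz) expfzDr // -invr_expz.
have zj0 : z ^ j != 0 by rewrite expfz_neq0.
apply/eqP/eqP => [-> | h]; first by rewrite divff.
by apply: (divIr (x := z ^ j)) ; rewrite ?unitfE // divff.
Qed.
Arguments zpow1 {L z N t}.
Arguments zpow_eq {L z N i j}.
Arguments prim_neq0 {L z N}.

Lemma galNormXz (F0 : fieldType) (L : splittingFieldType F0) (U V : {vspace L})
  (a : L) (t : int) : galNorm U V (a ^ t) = galNorm U V a ^ t.
Proof.
case: t => N; first exact: galNormX.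
by rewrite NegzE -!exprnN galNormV galNormX.
Qed.

Lemma lex_nseq (a : seq (option nat)) (m : nat) :
  size a = m -> a != nseq m None -> lex_lt (nseq m None) a.
Proof.
elim: a m => [|x a IH] [|m] //= [sz] na.
case: x na => [k|] na; first by [].
by rewrite /= IH // ; apply: contra na => /eqP ->.
Qed.

Theorem proposition3p3 (F0 : fieldType) (L : splittingFieldType F0)
  (p n : nat) (F K : {subfield L}) (sigma : gal_of K)
  (Ks : nat -> {subfield L}) (xi : L) (m : nat) (d : int) :
  prime p -> (1 <= n)%N -> p \notin [pchar L] ->
  (F <= K)%VS -> galois F K -> \dim_F K = (p ^ n)%N ->
  'Gal(K / F)%g = <[sigma]>%g ->
  (forall i, (i <= n)%N ->
     [/\ (F <= Ks i)%VS, (Ks i <= K)%VS & \dim_F (Ks i) = (p ^ i)%N]) ->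
  xi \in F -> p.-primitive_root xi ->
  (exists k, (1 <= k)%N /\
     exists2 z : L, (p ^ k)%N.-primitive_root z & K = <<F; z>>%AS) ->
  (p = 2%N -> has_mu p F 2) ->
  (1 <= m)%N ->
  (exists j, is_min_m_nu p K m j /\ chi_congr p K sigma j d) ->
  minimal_norm_pair p n F K sigma Ks xi m (nseq m None) d.
Proof.
move=> pp n1 _ FK galFK dimK Gal _ xiF xiprim [k [k1 [z zprim Kdef]]] p2 m1.
move=> [j [[jm hj jlt] chij]].
subst K.
have p1 := prime_gt1 pp; have p0 := prime_gt0 pp.
have zK : z \in <<F; z>>%AS by exact: memv_adjoin.
have z0 := prim_neq0 zprim.
have sG : sigma \in 'Gal(<<F; z>>%AS / F)%g by rewrite Gal cycle_id.
have ord : #[sigma]%g = (p ^ n)%N by rewrite /order -Gal -galois_dim.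
have sX : forall (a : L) (N : nat), sigma (a ^+ N) = sigma a ^+ N.
  by move=> a N; rewrite rmorphXn.
have fixF : forall a, a \in F -> sigma a = a by move=> a; apply: fixed_gal.
have fixz : forall i, (sigma ^+ i)%g z = z -> (p ^ n %| i)%N.
  move=> i hi; rewrite -ord order_dvdn.
  by rewrite (gal_adjoin_eq (groupX i sG) (group1 _)) hi gal_id.
have zNF : z \notin F.
  apply/negP => zF; have := fixz 1%N; rewrite expg1 fixF // => /(_ erefl).
  rewrite dvdn1 -(expn0 p) (inj_eq (expnI p1)) => /eqP n0; by rewrite n0 in n1.
have [[c c_lt] ec] : {c : 'I_(p ^ k) | sigma z = z ^+ c}.
  apply: prim_rootP => //.
  by rewrite -sX (prim_expr_order zprim) rmorph1.
rewrite /= in ec.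
have powσ : forall i, (sigma ^+ i)%g z = z ^+ (c ^ i).
  elim=> [|i IH]; first by rewrite expg0 gal_id expn0 expr1.
  by rewrite expgSr galM // IH sX ec -exprM expnS mulnC.
have A : forall (t : nat) (W : L), W \in F -> (p ^ t).-primitive_root W ->
    (t < k)%N /\ c = 1 %[mod p ^ t].
  move=> t W WF Wp.
  set s := minn t k.
  have pst : (p ^ s %| p ^ k)%N by apply: dvdn_exp2l; apply: geq_minr.
  have up := dvdn_prim_root zprim pst.
  set u := z ^+ (p ^ k %/ p ^ s) in up *.
  have uF : u \in F.
    have [i ->] := prim_rootP Wp (expr_dvd (prim_expr_order up) (dvdn_exp2l p (geq_minl t k))).
    exact: rpredX.
  have su : sigma u = u ^+ c by rewrite /u sX ec -!exprM mulnC.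
  have cu : u ^+ c = u ^+ 1 by rewrite expr1 -su fixF.
  move/eqP: cu; rewrite (eq_prim_root_expr up) => cmod.
  have tk : (t < k)%N.
    rewrite ltnNge; apply/negP => kt.
    have sk : s = k by apply/minn_idPr.
    move: uF; rewrite /u sk divnn expn_gt0 p0 expr1 => zF. by rewrite zF in zNF.
  have st : s = t by apply/minn_idPl; exact: ltnW.
  split => //; rewrite -st; exact/eqP.
have xiK : xi \in <<F; z>>%AS := subvP FK _ xiF.
have [k1' c1] : (1 < k)%N /\ c = 1 %[mod p ^ 1] by apply: (A 1%N xi xiF); rewrite expn1.
have c0 : (0 < c)%N.
  case: (posnP c) => [c0'|//]; move: c1; rewrite c0' mod0n expn1 modn_small //.
have j1 : (0 < j)%N.
  rewrite lt0n; apply/eqP => j0.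
  have := jlt; rewrite j0 => /(_ m1); apply; exists xi => //; by rewrite expn1.
have dp : (p%:Z %| d - 1)%Z.
  have := chij xi xiK (expr_dvd (prim_expr_order xiprim) (dvdn_exp j1 (dvdnn p))).
  rewrite fixF // => /eqP; rewrite -{1}(expr1z xi) eq_sym (zpow_eq xiprim).
  by [].
have [e ee] : exists e : int, sigma z = z ^ d * (z ^ e) ^+ (p ^ m).
  case: (leqP k j) => kj.
    exists 0; rewrite expr0z expr1n mulr1; apply: chij => //.
    exact: expr_dvd (prim_expr_order zprim) (dvdn_exp2l p kj).
  have jm' : j = m.
    apply/eqP; rewrite eqn_leq jm /=; rewrite leqNgt; apply/negP => jm2.
    apply: (jlt jm2); exists (z ^+ (p ^ k %/ p ^ j.+1)).
      exact: rpredX.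
    by apply: dvdn_prim_root => //; apply: dvdn_exp2l.
  subst j.
  set w := z ^+ (p ^ (k - m)).
  have hw : w ^+ (p ^ m) = 1.
    by rewrite /w -exprM -expnD subnK ?(ltnW kj) // (prim_expr_order zprim).
  have := chij w (rpredX _ zK) hw.
  rewrite {1}/w sX ec -exprM /w exprnP exprnP exprz_exp => /eqP.
  rewrite (zpow_eq zprim).
  have ek : (p ^ k)%N = (p ^ (k - m) * p ^ m)%N by rewrite -expnD subnK // ltnW.
  rewrite (_ : _ - _ = (p ^ (k - m))%N%:Z * (c%:Z - d)); last by rewrite PoszM; ring.
  rewrite ek PoszM dvdz_mul2l; last by rewrite eqz_nat -lt0n expn_gt0 p0.
  case/dvdzP => e he; exists e.
  rewrite !exprnP exprz_exp -expfzDr // -he.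
  by rewrite addrC subrK.
have modpow : forall q i, c = 1 %[mod q] -> (c ^ i = 1 %[mod q])%N.
  by move=> q i h; rewrite -modnXm h modnXm exp1n.
have s_ord : (sigma ^+ (p ^ n))%g = 1%g by rewrite -ord expg_order.
have hP : (p ^ k %| c ^ (p ^ n) - 1)%N.
  have := powσ (p ^ n)%N; rewrite s_ord gal_id => /esym/eqP.
  rewrite -{2}(expr1 z) (eq_prim_root_expr zprim) eqn_mod_dvd //.
  by rewrite expn_gt0 c0.
have hx : ~~ (p ^ k %| c ^ (p ^ n.-1) - 1)%N.
  apply/negP => h; have : (p ^ n %| p ^ n.-1)%N.
    apply: fixz; rewrite powσ; apply/eqP.
    rewrite -{2}(expr1 z) (eq_prim_root_expr zprim) eqn_mod_dvd //.
    by rewrite expn_gt0 c0.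
  rewrite dvdn_Pexp2l //; move: n1; case: (n) => // n' _; rewrite /= ltnn //.
have hnP : ~~ (p ^ k.+1 %| c ^ (p ^ n) - 1)%N.
  have -> : (c ^ (p ^ n) = (c ^ (p ^ n.-1)) ^ p)%N by rewrite -expnM -expnSr prednK.
  apply: lte_nat => //; first by rewrite expn_gt0 c0.
    rewrite -eqn_mod_dvd ?expn_gt0 ?c0 //; apply/eqP; apply: modpow.
    by move: c1; rewrite expn1.
  move=> pe; have [w wF wp] := p2 pe.
  have [_ c2] := A 2%N w wF wp.
  rewrite -eqn_mod_dvd ?expn_gt0 ?c0 //; apply/eqP; apply: modpow.
  by move: c2; rewrite pe.
set Pn := (c ^ (p ^ n))%N in hP hnP.
have Pn0 : (0 < Pn)%N by rewrite expn_gt0 c0.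
set Q := ((Pn - 1) %/ p)%N.
have eQ : (Q * p = Pn - 1)%N.
  by rewrite divnK // (dvdn_trans _ hP) // dvdn_exp.
set y := z ^+ Q.
have yp : p.-primitive_root y.
  have y1 : y ^+ p = 1 by rewrite -exprM eQ; apply/eqP; rewrite -(prim_order_dvd zprim).
  have [m' mp m'p] := prim_order_exists p0 y1.
  case/primeP: pp => _ /(_ _ m'p) /orP[/eqP m1'|/eqP mp']; last by rewrite -mp'.
  subst m'; have := prim_expr_order mp; rewrite expr1 => /eqP.
  rewrite -(prim_order_dvd zprim) => hQ.
  by move: hnP; rewrite -eQ expnSr dvdn_mul.
have [[u u_lt] eu] := prim_rootP yp (prim_expr_order xiprim).
rewrite /= in eu.
set S := (\sum_(i < p ^ n) c ^ i)%N.
have eS : ((c - 1) * S = Pn - 1)%N by rewrite !subn1 /Pn predn_exp.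
have nz : galNorm F <<F; z>>%AS z = z ^+ S.
  have eC : <[sigma]>%g = [set (sigma ^+ (val i))%g | i : 'I_(p ^ n)].
    apply/setP => x; apply/idP/imsetP.
      case/cyclePmin => i; rewrite ord => ilt ->.
      by exists (Ordinal ilt).
    by case=> i _ ->; apply/cycleP; exists (val i).
  rewrite /galNorm Gal eC big_imset /=; last first.
    move=> i i' _ _ /eqP; rewrite eq_expg_mod_order ord !modn_small //.
    by move=> /eqP /val_inj.
  rewrite /S -prodrXr.
  by apply: eq_bigr => i _; rewrite powσ.
have : z ^+ c = z ^ d * (z ^ e) ^+ (p ^ m) by rewrite -ec ee.
rewrite !exprnP exprz_exp -expfzDr // => /eqP; rewrite (zpow_eq zprim).
case/dvdzP => f hf.
have np : norm_pair p n F <<F; z>>%AS sigma Ks xi m (nseq m None) d.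
  split.
  - split; [exact: m1 | exact: size_nseq | by rewrite all_nseq orbT |
            by rewrite nth_nseq; case: (0 < m)%N].
  - exact: dp.
  pose delta i := if i == m then z ^ (e * u%:Z) else 1.
  exists (z ^+ u), delta; split.
  - split; [exact: rpredX | exact: expf_neq0 | rewrite /delta eqxx; exact: rpredXz |
            by rewrite /delta eqxx expfz_neq0].
  - move=> i im; rewrite nth_nseq im /delta ifN //; by rewrite neq_ltn im.
  - rewrite big_ord_recr /= big1 => [|i _]; last first.
      by rewrite /delta ifN ?expr1n // neq_ltn ltn_ord.
    rewrite mul1r /delta eqxx sX ee !exprnP expfzMl !exprz_exp.
    congr (z ^ _ * z ^ _); ring.
  have [q eq] := dvdzP dp.
  have p0z : p%:Z != 0 by rewrite eqz_nat -lt0n.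
  rewrite eq mulzK // /delta ifN ?galNorm1 ?mulr1; last by rewrite neq_ltn m1.
  rewrite big_nat_recr //= big_nat_cond big1 => [|i /andP[/andP[_ im] _]]; last first.
    by rewrite ifN ?galNorm1 ?expr1n // neq_ltn im.
  rewrite mul1r eqxx galNormX galNormXz nz eu /y.
  rewrite !exprnP !exprz_exp -expfzDr //.
  apply/eqP; rewrite (zpow_eq zprim).
  have c1' : c = 1 %[mod p] by rewrite -(expn1 p).
  have pS : (p %| S)%N.
    rewrite /dvdn /S -modn_summ (eq_bigr (fun _ => 1%N)) => [|i _]; last first.
      by rewrite (modpow p i c1') modn_small.
    by rewrite sum_nat_const card_ord muln1 -/(dvdn p (p ^ n)) dvdn_exp.
  case/dvdnP: pS => s' es'.
  have eQz : Q%:Z * p%:Z = Pn%:Z - 1 by rewrite -PoszM eQ subzn.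
  have eSz : (c%:Z - 1) * S%:Z = Pn%:Z - 1 by rewrite subzn // -PoszM eS subzn.
  have pm : (p ^ m)%N%:Z = (p ^ m.-1)%N%:Z * p%:Z by rewrite -PoszM -expnSr prednK.
  have pk : (p ^ k)%N%:Z = (p ^ k.-1)%N%:Z * p%:Z by rewrite -PoszM -expnSr prednK.
  set X := (Q%:Z * u%:Z - _).
  have hX : X * p%:Z = S%:Z * u%:Z * f * (p ^ k)%N%:Z.
    have -> : X * p%:Z = u%:Z * (Q%:Z * p%:Z) - S%:Z * u%:Z * (q * p%:Z)
                        - S%:Z * e * u%:Z * ((p ^ m.-1)%N%:Z * p%:Z) by rewrite /X; ring.
    rewrite eQz -eq -pm -eSz.
    rewrite (_ : S%:Z * u%:Z * f * _ = S%:Z * u%:Z * (f * (p ^ k)%N%:Z)); last by ring.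
    rewrite -hf; ring.
  rewrite es' PoszM pk in hX.
  have : X = s'%:Z * u%:Z * f * (p ^ k.-1)%N%:Z * p%:Z.
    apply: (mulIf p0z); rewrite hX; ring.
  move=> ->; rewrite pk; apply/dvdzP; exists (s'%:Z * u%:Z * f); ring.
split => // a' d' np'.
case: np' => [[_ sz _ _] dp' [alpha [delta [[aK a0 dK d0] hdel _ hxi]]]].
case: (eqVneq a' (nseq m None)) => [ea|na]; last by rewrite /np_le lex_nseq.
subst a'; rewrite /np_le eqxx /=; apply/orP; right.
have vle : forall x, (vmin p m x <= m)%N.
  by move=> x; rewrite /vmin; case: ifP => // _; apply: geq_minr.
set r := vmin p m (d - 1).
case: (ltnP r m) => rm; last by apply: leq_trans (vle _) rm.
have [d10 er] : d - 1 != 0 /\ r = logn p `|d - 1|%N.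
  move: rm; rewrite /r /vmin; case: eqP => [_|/eqP dn0]; first by rewrite ltnn.
  move=> h; split => //; move: h; rewrite gtn_min ltnn orbF => /ltnW /minn_idPl h; exact: h.
rewrite leqNgt; apply/negP => hr.
have pd' : ((p ^ r.+1)%N%:Z %| d' - 1)%Z.
  move: hr; rewrite /vmin; case: eqP => [->|/eqP dn0]; first by rewrite dvdz0.
  rewrite leq_min => /andP[h _]; rewrite dvdzE /= pfactor_dvdn //.
  by rewrite absz_gt0.
have [q' eq'] := dvdzP pd'.
have p0z : p%:Z != 0 by rewrite eqz_nat -lt0n.
have pr1 : (p ^ r.+1)%N%:Z = (p ^ r)%N%:Z * p%:Z by rewrite -PoszM expnSr.
have hdiv : ((d' - 1) %/ p)%Z = q' * (p ^ r)%N%:Z by rewrite eq' pr1 mulrA mulzK.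
have dl1 : forall i, (i < m)%N -> delta i = 1.
  by move=> i im; have := hdel i im; rewrite nth_nseq im.
move: hxi; rewrite hdiv dl1 // galNorm1 mulr1.
rewrite big_nat_recr //= big_nat_cond big1 => [|i /andP[/andP[_ im] _]]; last first.
  by rewrite dl1 ?galNorm1 ?expr1n.
rewrite mul1r => hxi.
set Na := galNorm F <<F; z>>%AS alpha in hxi.
set Nd := galNorm F <<F; z>>%AS (delta m) in hxi.
set W := Na ^ q' * Nd ^+ (p ^ (m.-1 - r)).
have rm1 : (r <= m.-1)%N by rewrite -ltnS prednK.
have eW : W ^+ (p ^ r) = xi.
  have e1 : (Na ^ q') ^+ (p ^ r) = Na ^ (q' * (p ^ r)%N%:Z) by rewrite exprnP exprz_exp.
  have e2 : (Nd ^+ (p ^ (m.-1 - r))) ^+ (p ^ r) = Nd ^+ (p ^ m.-1).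
    by rewrite -exprM -expnD subnK.
  by rewrite hxi /W exprMn e1 e2.
have WF : W \in F.
  apply: rpredM; first by apply: rpredXz; exact: mem_galNorm.
  by apply: rpredX; exact: mem_galNorm.
have xi1 : xi != 1.
  have := prim_order_dvd xiprim 1; rewrite expr1 dvdn1 => <-.
  by rewrite neq_ltn p1 orbT.
have Wprim : (p ^ r.+1).-primitive_root W.
  have W1 : W ^+ (p ^ r.+1) = 1 by rewrite expnSr exprM eW (prim_expr_order xiprim).
  have pr0 : (0 < p ^ r.+1)%N by rewrite expn_gt0 p0.
  have [m'' mp m''d] := prim_order_exists pr0 W1.
  case/(dvdn_pfactor _ _ pp): m''d => s sr es; subst m''.
  case: (ltnP s r.+1) => [sr'|rs]; last by move: mp; have -> : s = r.+1 by apply/eqP; rewrite eqn_leq sr rs.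
  move: xi1; rewrite -eW -(prim_order_dvd mp) dvdn_exp2l //.
have [rk cr] := A r.+1 W WF Wprim.
have h1 : ((p ^ r.+1)%N%:Z %| c%:Z - 1)%Z.
  rewrite subzn // dvdzE /= -eqn_mod_dvd //; exact/eqP.
have hm : ((p ^ r.+1)%N%:Z %| (p ^ m)%N%:Z)%Z by rewrite dvdzE /= dvdn_exp2l.
have hk : ((p ^ r.+1)%N%:Z %| (p ^ k)%N%:Z)%Z by rewrite dvdzE /= dvdn_exp2l // ltnW.
have ed : d - 1 = (c%:Z - 1) - e * (p ^ m)%N%:Z - f * (p ^ k)%N%:Z by rewrite -hf; ring.
have : ((p ^ r.+1)%N%:Z %| d - 1)%Z.
  by rewrite ed; apply: rpredB; [apply: rpredB; [exact: h1 | exact: dvdz_mull] | exact: dvdz_mull].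
rewrite dvdzE /= pfactor_dvdn // ?absz_gt0 // -er ltnn //.
Qed.
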